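(* Let $G$ be a very well-covered graph with $V(G)=X\cup Y$, $X=\{x_1,\ldots,x_h\}$ a minimal vertex cover, $Y=\{y_1,\ldots,y_h\}$ a maximal independent set, and $\{x_i,y_i\}\in E(G)$ for all $i$. Fix $i\in\{1,\ldots,h\}$ and write $N_G(x_i)\setminus X=\{y_{i_1},\ldots,y_{i_t}\}$. For $j\in\{1,\dots,h\}$ put $x_j'=y_j$ and $y_j'=x_j$ if $j\in\{i_1,\ldots,i_t\}$, and $x_j'=x_j$, $y_j'=y_j$ otherwise; let $X'=\{x_1',\ldots,x_h'\}$ and $Y'=V(G)\setminus X'=\{y_1',\dots,y_h'\}$. Let $G_1$ be $G$ with this relabelling. Then $X'$ is a minimal vertex cover of $G_1$, $Y'$ is a maximal independent set of $G_1$, $\{x_j',y_j'\}\in E(G_1)$ for all $j$, and $G_1$ with respect to the labelling $x_j',y_j'$ satisfies: (1) if $\{z_a,x_b'\},\{y_b',x_c'\}\in E(G_1)$ for distinct $a,b,c$ and $z_a\in\{x_a',y_a'\}$, then $\{z_a,x_c'\}\in E(G_1)$; (2) if $\{x_a',y_b'\}\in E(G_1)$ then $\{x_a',x_b'\}\notin E(G_1)$.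
   Context: $G$ is very well-covered if it has no isolated vertices, all minimal vertex covers have the same size, and this size is $|V(G)|/2$. $N_G(v)$ denotes the set of neighbours of $v$ in $G$. *)

(* Defs.v *)
From mathcomp Require Import all_boot.
Set Implicit Arguments. Unset Strict Implicit. Unset Printing Implicit Defensive.

Definition simple_graph (T : finType) (e : rel T) : Prop :=
  symmetric e /\ irreflexive e.

Definition vertex_cover (T : finType) (e : rel T) (C : {set T}) : Prop :=
  forall u v, e u v -> (u \in C) \/ (v \in C).

Definition minimal_vertex_cover (T : finType) (e : rel T) (C : {set T}) : Prop :=
  vertex_cover e C /\ forall D : {set T}, D \proper C -> ~ vertex_cover e D.

Definition independent (T : finType) (e : rel T) (S : {set T}) : Prop :=
  forall u v, u \in S -> v \in S -> ~~ e u v.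

Definition maximal_independent (T : finType) (e : rel T) (S : {set T}) : Prop :=
  independent e S /\ forall S' : {set T}, S \proper S' -> ~ independent e S'.

Definition very_well_covered (T : finType) (e : rel T) : Prop :=
  (forall v : T, exists u : T, e v u) /\
  (forall C : {set T}, minimal_vertex_cover e C -> 2 * #|C| = #|T|).

(* Main.v *)
Require Import Defs.
From mathcomp Require Import all_boot.
From mathcomp Require Import zify.

Section Aux.
Variables (T : finType) (e : rel T) (h : nat) (x y : 'I_h -> T).
Hypotheses (sg : simple_graph e) (vwc : very_well_covered e)
  (xinj : injective x) (yinj : injective y)
  (XY : [set x j | j : 'I_h] :|: [set y j | j : 'I_h] = [set: T])
  (Xmin : minimal_vertex_cover e [set x j | j : 'I_h])
  (Yind : independent e [set y j | j : 'I_h])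
  (xy : forall j, e (x j) (y j)).

Lemma cardT : #|T| = 2 * h.
Proof. by have := (vwc.2 _ Xmin); rewrite card_imset // card_ord. Qed.

Lemma disj j k : x j != y k.
Proof.
have := cardsUI [set x j | j : 'I_h] [set y j | j : 'I_h].
rewrite XY cardsT cardT !card_imset // card_ord => H.
have H0 : #|[set x j | j : 'I_h] :&: [set y j | j : 'I_h]| = 0.
  by move: H; lia.
have := cards0_eq H0 => E.
apply/eqP => Ejk.
have : x j \in [set x j | j : 'I_h] :&: [set y j | j : 'I_h].
  by rewrite inE; apply/andP; split; apply/imsetP; [exists j | exists k].
by rewrite E inE.
Qed.

Definition indb (S : {set T}) := [forall u in S, forall v in S, ~~ e u v].

Lemma indbP S : reflect (independent e S) (indb S).
Proof.
apply: (iffP forall_inP) => H.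
  by move=> u v uS vS; have /forall_inP := H u uS; apply.
by move=> u uS; apply/forall_inP => v vS; apply: H.
Qed.

Lemma extend S : independent e S -> exists M : {set T}, S \subset M /\ maximal_independent e M.
Proof.
move/indbP => HS.
have [M MM SM] := @maxset_exists T indb S HS.
exists M; split => //; split; first by apply/indbP; apply: maxsetp MM.
move=> S' /properP [MS' [v vS' vM]] /indbP IS'.
by move: vM; rewrite -(maxsetsup MM IS' MS') vS'.
Qed.

Lemma K2 u w j : ~~ e u w -> e u (x j) -> e w (y j) -> False.
Proof.
move=> nuw ux wy.
have [sym irr] := sg.
have IS : independent e [set u; w].
  move=> a b; rewrite !inE => /orP [] /eqP -> /orP [] /eqP ->;
    rewrite ?irr //; by rewrite sym.
have [M [SM [IM maxM]]] := extend _ IS.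
have uM : u \in M by apply: (subsetP SM); rewrite !inE eqxx.
have wM : w \in M by apply: (subsetP SM); rewrite !inE eqxx orbT.
have xC : x j \in ~: M by rewrite inE; apply/negP => xM; have := IM _ _ uM xM; rewrite ux.
have yC : y j \in ~: M by rewrite inE; apply/negP => yM; have := IM _ _ wM yM; rewrite wy.
have coverC : vertex_cover e (~: M).
  move=> a b ab; rewrite !inE; case aM: (a \in M); case bM: (b \in M); [|by right|by left|by left].
  by have := IM _ _ aM bM; rewrite ab.
have minC : minimal_vertex_cover e (~: M).
  split => // D /properP [DC [v vC vD]] Dcov.
  apply: (maxM (v |: M)).
    apply/properP; split; first by apply: subsetUr.
    by exists v; [rewrite !inE eqxx | rewrite inE in vC].
  move=> a b aM bM; apply/negP => ab.
  have nD : forall c, c \in v |: M -> c \notin D.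
    move=> c; rewrite !inE => /orP [/eqP -> // | cM].
    by apply/negP => cD; have := subsetP DC _ cD; rewrite inE cM.
  by case: (Dcov _ _ ab) => H; [move: (nD _ aM) | move: (nD _ bM)]; rewrite H.
have cC : #|~: M| = h by have := vwc.2 _ minC; rewrite cardT; lia.
pose f k := if x k \in ~: M then x k else y k.
have fC k : f k \in ~: M.
  rewrite /f; case: ifP => // /negbT; rewrite !inE => /negPn xM.
  by apply/negP => yM; have := IM _ _ xM yM; rewrite xy.
have finj : injective f.
  move=> k l; rewrite /f; case: ifP; case: ifP => _ _ E.
  - exact: xinj.
  - by move: (disj k l); rewrite E eqxx.
  - by move: (disj l k); rewrite E eqxx.
  - exact: yinj.
have Eim : [set f k | k : 'I_h] = ~: M.
  apply/eqP; rewrite eqEcard; apply/andP; split.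
    by apply/subsetP => z /imsetP [k _ ->].
  by rewrite card_imset // card_ord cC.
move: yC; rewrite -Eim => /imsetP [k _].
rewrite /f; case: ifP => H E.
  by move: (disj k j); rewrite E eqxx.
have kj := yinj _ _ E; subst k.
by rewrite xC in H.
Qed.

End Aux.
Theorem lemma3p4 (T : finType) (e : rel T) (h : nat)
  (x y : 'I_h -> T) (i : 'I_h) :
  simple_graph e ->
  very_well_covered e ->
  injective x -> injective y ->
  [set x j | j : 'I_h] :|: [set y j | j : 'I_h] = [set: T] ->
  minimal_vertex_cover e [set x j | j : 'I_h] ->
  maximal_independent e [set y j | j : 'I_h] ->
  (forall j : 'I_h, e (x j) (y j)) ->
  let X := [set x j | j : 'I_h] in
  (* indices j with y_j in N_G(x_i) \ X *)
  let J := [set j : 'I_h | (y j \notin X) && e (x i) (y j)] in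
  let x' := fun j : 'I_h => if j \in J then y j else x j in
  let y' := fun j : 'I_h => if j \in J then x j else y j in
  let X' := [set x' j | j : 'I_h] in
  let Y' := [set y' j | j : 'I_h] in
  [/\ minimal_vertex_cover e X' /\ Y' = ~: X',
      maximal_independent e Y',
      (forall j : 'I_h, e (x' j) (y' j)),
      (forall (a b c : 'I_h) (z : T), a != b -> b != c -> a != c ->
          (z = x' a \/ z = y' a) ->
          e z (x' b) -> e (y' b) (x' c) -> e z (x' c)) &
      (forall a b : 'I_h, e (x' a) (y' b) -> ~~ e (x' a) (x' b))].

Proof.
move=> sg vwc xinj yinj XY Xmin [Yind Ymax] xy X J x' y' X' Y'.
have [sym irr] := sg.
have K := @K2 _ _ _ x y sg vwc xinj yinj XY Xmin xy.
have disj := @disj _ _ _ x y vwc xinj yinj XY Xmin.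
have K' : forall u w j, ~~ e u w -> e u (x' j) -> e w (y' j) -> False.
  move=> u w j; rewrite /x' /y'; case: ifP => _ h1 h2 h3.
    by apply: (K w u j) => //; rewrite sym.
  exact: (K u w j).
have exy' : forall j, e (x' j) (y' j).
  by move=> j; rewrite /x' /y'; case: ifP => _; [rewrite sym|].
have ynX : forall j, y j \notin X.
  by move=> j; apply/imsetP => [[k _ E]]; move: (disj k j); rewrite E eqxx.
have jJ : forall j, (j \in J) = e (x i) (y j).
  by move=> j; rewrite inE ynX.
have Yi : independent e Y'.
  move=> u v /imsetP [a _ ->] /imsetP [b _ ->]; apply/negP => ab.
  move: ab; rewrite /y'; case aJ: (a \in J); case bJ: (b \in J) => ab.
  - rewrite !jJ in aJ bJ.
    case xai: (e (x a) (x i)).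
      by apply: (K (x i) (x i) a); rewrite ?irr // sym.
    by apply: (K (x a) (x i) b); rewrite ?xai.
  - rewrite jJ in aJ; move/negbT: bJ; rewrite jJ => bJ.
    case yb: (e (y b) (x i)).
      by move: bJ; rewrite sym yb.
    by apply: (K (y b) (x i) a); rewrite ?yb // sym.
  - rewrite jJ in bJ; move/negbT: aJ; rewrite jJ => aJ.
    case ya: (e (y a) (x i)).
      by move: aJ; rewrite sym ya.
    by apply: (K (y a) (x i) b); rewrite ?ya.
  - have : ~~ e (y a) (y b) by apply: Yind; apply/imsetP; [exists a|exists b].
    by rewrite ab.
have cov : forall v, (v \in X') || (v \in Y').
  move=> v; have : v \in [set: T] by rewrite inE.
  rewrite -XY inE => /orP [] /imsetP [k _ ->]; rewrite /X' /Y' /x' /y';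
    case kJ: (k \in J).
  - by apply/orP; right; apply/imsetP; exists k => //; rewrite kJ.
  - by apply/orP; left; apply/imsetP; exists k => //; rewrite kJ.
  - by apply/orP; left; apply/imsetP; exists k => //; rewrite kJ.
  - by apply/orP; right; apply/imsetP; exists k => //; rewrite kJ.
have YX : Y' = ~: X'.
  apply/setP => v; rewrite inE; case vY: (v \in Y').
    apply/esym/negP => /imsetP [a _ E].
    have ya : y' a \in Y' by apply/imsetP; exists a.
    by have := Yi _ _ vY ya; rewrite E exy'.
  by have := cov v; rewrite vY orbF => ->.
have X'cov : vertex_cover e X'.
  move=> u v uv; case uX: (u \in X'); [by left|]; case vX: (v \in X'); [by right|].
  have uY : u \in Y' by rewrite YX inE uX.
  have vY : v \in Y' by rewrite YX inE vX.
  by have := Yi _ _ uY vY; rewrite uv.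
split.
- split => //; split => // D /properP [DX [v vX vD]] Dcov.
  case/imsetP: vX => j _ E; subst v.
  have yX : y' j \notin X'.
    have : y' j \in Y' by apply/imsetP; exists j.
    by rewrite YX inE.
  by case: (Dcov _ _ (exy' j)) => H; [move: vD|move: yX; rewrite (subsetP DX _ H)]; rewrite ?H.
- split => // S' /properP [YS [v vS vY]] IS.
  have : v \in X' by rewrite YX inE in vY; move/negPn: vY.
  case/imsetP => j _ E; subst v.
  have yS : y' j \in S' by apply: (subsetP YS); apply/imsetP; exists j.
  by have := IS _ _ vS yS; rewrite exy'.
- exact: exy'.
- move=> a b c z _ _ _ Hz zb bc.
  case zc: (e z (x' c)) => //; exfalso.
  by apply: (K' z (x' c) b); rewrite ?zc // sym.
- move=> a b H; apply/negP => H2.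
  by apply: (K' (x' a) (x' a) b); rewrite ?irr.
Qed.
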